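(* Let $p\in\{*,\le\omega\}$ and $L\subseteq\Sigma^p$ (where $\Sigma^{\le\omega}=\Sigma^*\cup\Sigma^\omega$). Then $\gamma_p(\alpha_p(L))\subseteq L(\mathfrak A)$ if and only if $L\subseteq L(\mathfrak A)$.
   Context: $\Sigma$ is a finite alphabet; concatenation $w\cdot u$ equals $wu$ if $w$ is finite and $w$ if $w$ is infinite, extended pointwise to languages. For $A\subseteq\Sigma^*$, $A^\omega$ is the set of all words $w_0w_1w_2\cdots$ with $w_i\in A$, and $CD^\omega$ means $C\cdot D^\omega$. Fix an extended Büchi automaton $\mathfrak A=(Q,\Sigma,\delta,q_0,F)$ (finite states, $\delta:Q\times\Sigma\to\mathcal P(Q)$, initial $q_0$, final $F$). Its language $L(\mathfrak A)\subseteq\Sigma^{\le\omega}$ consists of all finite words along which some path from $q_0$ reaches a final state, together with all infinite words having a run from $q_0$ visiting final states infinitely often. For $w\in\Sigma^*$ write $p\overset{w}{\leadsto}q$ if $q$ is reachable from $p$ reading $w$, and $p\overset{w}{\leadsto}_F q$ if there are $q''\in F$, $w=uv$ with $p\overset{u}{\leadsto}q''\overset{v}{\leadsto}q$. For $w,u\in\Sigma^+$, $w\sim u$ iff for all $p,q$: $p\overset{w}{\leadsto}q\Leftrightarrow p\overset{u}{\leadsto}q$ and $p\overset{w}{\leadsto}_Fq\Leftrightarrow p\overset{u}{\leadsto}_Fq$. $\mathcal Q=\Sigma^+/{\sim}\uplus\{[\epsilon]\}$ with $[\epsilon]=\{\epsilon\}$; concatenation of classes is well defined. Let $\mathcal C=\{(C,D)\mid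 C,D\in\mathcal Q,\ CD=C,\ DD=D\}$. Define $\mathfrak f(V)=\{(C,D)\in\mathcal C\mid CD^\omega\cap V\neq\emptyset\}$ and $\mathfrak g(\mathcal V)=\bigcup_{(C,D)\in\mathcal V}CD^\omega$; the closure is $\mathfrak c(\mathcal V)=\bigcup_{n\ge1}(\mathfrak f\circ\mathfrak g)^n(\mathcal V)$. $\mathcal M_{\le\omega}=\{\mathfrak c(\mathfrak f(V))\mid V\subseteq\Sigma^{\le\omega}\}$, $\mathcal M_*=\mathcal P(\mathcal Q)$. $\alpha_*(U)=\{C\in\mathcal Q\mid C\cap U\neq\emptyset\}$, $\alpha_{\le\omega}(V)=\mathfrak c(\mathfrak f(V))$, $\gamma_*(\mathcal U)=\bigcup_{C\in\mathcal U}C$, $\gamma_{\le\omega}(\mathcal V)=\mathfrak g(\mathcal V)$. *)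

(* Defs.v *)
From mathcomp Require Import all_boot.
Set Implicit Arguments. Unset Strict Implicit. Unset Printing Implicit Defensive.

(* Words over a finite alphabet S: finite words are [seq S], infinite words
   are streams [nat -> S]; Sigma^{<=omega} is [word S]. *)
Inductive word (S : Type) : Type :=
| Fw : seq S -> word S
| Iw : (nat -> S) -> word S.
Arguments Fw {S}. Arguments Iw {S}.

Definition flang (S : Type) := seq S -> Prop.
Definition wlang (S : Type) := word S -> Prop.

Record eba (S Q : finType) := EBA {
  delta : Q -> S -> {set Q};
  q0 : Q;
  fin : {set Q} }.

Section Defs.
Variables (S Q : finType) (A : eba S Q).

Fixpoint reach (p : Q) (w : seq S) (q : Q) : Prop :=
  match w with
  | [::] => p = q
  | a :: w' => exists2 p', p' \in delta A p a & reach p' w' q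
  end.

Definition reachF (p : Q) (w : seq S) (q : Q) : Prop :=
  exists q'', q'' \in fin A /\ exists u v, w = u ++ v /\ reach p u q'' /\ reach q'' v q.

Definition accepts (x : word S) : Prop :=
  match x with
  | Fw w => exists q, q \in fin A /\ reach (q0 A) w q
  | Iw s => exists r : nat -> Q, r 0 = q0 A /\ (forall n, r n.+1 \in delta A (r n) (s n))
              /\ forall N, exists m, N <= m /\ r m \in fin A
  end.

Definition sim (w u : seq S) : Prop :=
  forall p q, (reach p w q <-> reach p u q) /\ (reachF p w q <-> reachF p u q).

Definition cls (w : seq S) : flang S :=
  if w is [::] then (fun u => u = [::]) else (fun u => u <> [::] /\ sim w u).

(* membership in the set of classes Q = Sigma^+/~ (+) {[eps]} *)
Definition is_cls (C : flang S) : Prop := exists w, C = cls w.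

Definition cls_cat (C D : flang S) : flang S :=
  fun u => exists x y, C x /\ D y /\ cls (x ++ y) u.

Definition Cpairs (CD : flang S * flang S) : Prop :=
  is_cls CD.1 /\ is_cls CD.2 /\ cls_cat CD.1 CD.2 = CD.1 /\ cls_cat CD.2 CD.2 = CD.2.

Definition wcat (u : seq S) (x : word S) : word S :=
  match x with
  | Fw v => Fw (u ++ v)
  | Iw s => Iw (fun i => if i < size u then nth (s 0) u i else s (i - size u))
  end.

Definition flat_upto (ws : nat -> seq S) (N : nat) : seq S :=
  flatten [seq ws i | i <- iota 0 N].

(* x = w_0 w_1 w_2 ... (infinite concatenation of finite words, a finite word
   if from some point on all w_i are empty, an infinite word otherwise) *)
Definition omega_cat (ws : nat -> seq S) (x : word S) : Prop :=
  match x with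
  | Fw v => exists N, (forall n, N <= n -> ws n = [::]) /\ v = flat_upto ws N
  | Iw s => (forall N, exists n, N <= n /\ ws n <> [::]) /\
            forall N i, i < size (flat_upto ws N) -> s i = nth (s 0) (flat_upto ws N) i
  end.

Definition omega (D : flang S) : wlang S :=
  fun x => exists ws, (forall n, D (ws n)) /\ omega_cat ws x.

Definition CDomega (C D : flang S) : wlang S :=
  fun x => exists u y, C u /\ omega D y /\ x = wcat u y.

Definition ffun_ (V : wlang S) : flang S * flang S -> Prop :=
  fun CD => Cpairs CD /\ exists x, CDomega CD.1 CD.2 x /\ V x.

Definition gfun_ (VV : flang S * flang S -> Prop) : wlang S :=
  fun x => exists CD, VV CD /\ CDomega CD.1 CD.2 x.

Definition closure (VV : flang S * flang S -> Prop) : flang S * flang S -> Prop :=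
  fun CD => exists n, 1 <= n /\ iter n (fun X => ffun_ (gfun_ X)) VV CD.

Definition alpha_star (U : flang S) : flang S -> Prop :=
  fun C => is_cls C /\ exists u, C u /\ U u.
Definition gamma_star (UU : flang S -> Prop) : flang S :=
  fun u => exists C, UU C /\ C u.
Definition alpha_omega (V : wlang S) : flang S * flang S -> Prop :=
  closure (ffun_ V).
Definition gamma_omega (VV : flang S * flang S -> Prop) : wlang S := gfun_ VV.

End Defs.

(* Main.v *)
Require Import Defs.
From mathcomp Require Import all_boot.
From Stdlib Require Import Classical ClassicalEpsilon FunctionalExtensionality PropExtensionality.
Set Implicit Arguments. Unset Strict Implicit. Unset Printing Implicit Defensive.
Lemma smono (f : nat -> nat) : (forall i, f i < f i.+1) -> forall i j, i < j -> f i < f j.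
Proof.
move=> H i; elim=> // j IH. rewrite ltnS leq_eqVlt. case/orP => [/eqP->|h]; first exact: H.
exact: ltn_trans (IH h) (H j).
Qed.

Section Ramsey.
Variables (K : finType) (col : nat -> nat -> K).

Definition inf (P : nat -> Prop) := forall N, exists n, N <= n /\ P n.

Lemma inf_pigeon (P : nat -> Prop) (f : nat -> K) : inf P -> exists c, inf (fun n => P n /\ f n = c).
Proof.
move=> HP. apply: NNPP => Hn.
have Hc : forall c, exists N, forall n, N <= n -> P n -> f n <> c.
  move=> c. apply: NNPP => H. apply: Hn. exists c => N. apply: NNPP => H2. apply: H.
  exists N => n Hn' HPn Hf. apply: H2. by exists n.
pose Nc c := epsilon (inhabits 0) (fun N => forall n, N <= n -> P n -> f n <> c).
have HNc : forall c n, Nc c <= n -> P n -> f n <> c.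
  move=> c. exact: (epsilon_spec (inhabits 0) _ (Hc c)).
have [n [Hn0 HPn]] := HP (\max_c Nc c).
apply: (HNc (f n) n) => //. apply: leq_trans _ Hn0. exact: leq_bigmax.
Qed.

Definition colof a P := epsilon (inhabits (col 0 0)) (fun c => inf (fun n => P n /\ col a n = c)).
Definition nxt a P := epsilon (inhabits 0) (fun m => P m /\ col a m = colof a P).

Fixpoint st i : nat * (nat -> Prop) :=
  if i is i'.+1 then
    let: (a, P) := st i' in (nxt a P, fun n => (P n /\ col a n = colof a P) /\ nxt a P < n)
  else (0, fun n : nat => is_true (0 < n)).

Definition sa i := (st i).1.
Definition sP i := (st i).2.
Definition sc i := colof (sa i) (sP i).
Definition sQ i := fun n => sP i n /\ col (sa i) n = sc i.

Lemma st_S i : st i.+1 = (nxt (sa i) (sP i), fun n => sQ i n /\ nxt (sa i) (sP i) < n).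
Proof. rewrite /sQ /sc /sa /sP /=. by case: (st i). Qed.

Lemma sa_S i : sa i.+1 = nxt (sa i) (sP i). Proof. by rewrite /sa st_S. Qed.
Lemma sP_S i n : sP i.+1 n = (sQ i n /\ nxt (sa i) (sP i) < n). Proof. by rewrite /sP st_S. Qed.

Lemma st_inv i : inf (sP i) /\ forall n, sP i n -> sa i < n.
Proof.
elim: i => [|i [IH1 IH2]].
  split; first by move=> N; exists N.+1; split. by move=> n; rewrite /sP /sa.
have HQ : inf (sQ i).
  have [c Hc] := inf_pigeon (col (sa i)) IH1.
  exact: (epsilon_spec (inhabits (col 0 0)) (fun c => inf (fun n => sP i n /\ col (sa i) n = c)) (ex_intro _ c Hc)).
split.
  move=> N. have [n [Hn Hq]] := HQ (maxn N (nxt (sa i) (sP i)).+1).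
  exists n. rewrite sP_S. split; last split => //.
    exact: leq_trans (leq_maxl _ _) Hn.
  exact: leq_trans (leq_maxr _ _) Hn.
by move=> n; rewrite sP_S sa_S => -[].
Qed.

Lemma sQ_next i : sQ i (sa i.+1).
Proof.
have [H1 _] := st_inv i.
have HQ : inf (sQ i).
  have [c Hc] := inf_pigeon (col (sa i)) H1.
  exact: (epsilon_spec (inhabits (col 0 0)) (fun c => inf (fun n => sP i n /\ col (sa i) n = c)) (ex_intro _ c Hc)).
have [n [_ Hn]] := HQ 0.
rewrite sa_S. exact: (epsilon_spec (inhabits 0) (fun m => sP i m /\ col (sa i) m = colof (sa i) (sP i)) (ex_intro _ n Hn)).
Qed.

Lemma sQ_mono d i n : sQ (i + d) n -> sQ i n.
Proof.
elim: d => [|d IH]; first by rewrite addn0.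
rewrite addnS => -[H _]. apply: IH. rewrite sP_S in H. exact: H.1.
Qed.

Lemma sa_incr i : sa i < sa i.+1.
Proof. have [_ H] := st_inv i. apply: H. exact: (sQ_next i).1. Qed.

Lemma sa_col i j : i < j -> col (sa i) (sa j) = sc i.
Proof.
case: j => // j. rewrite ltnS => H. have := sQ_next j.
rewrite -(subnKC H) => /sQ_mono. by case.
Qed.

Lemma ramsey : exists a : nat -> nat, (forall i, a i < a i.+1) /\
  exists c, forall i j, i < j -> col (a i) (a j) = c.
Proof.
have [c0 Hc0] := inf_pigeon sc (P := fun _ => True) (fun N => ex_intro _ N (conj (leqnn N) I)).
pose pick N := epsilon (inhabits 0) (fun n => N <= n /\ (True /\ sc n = c0)).
have Hpick : forall N, N <= pick N /\ (True /\ sc (pick N) = c0).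
  move=> N. exact: (epsilon_spec (inhabits 0) (fun n => N <= n /\ (True /\ sc n = c0)) (Hc0 N)).
pose e := fix e k := if k is k'.+1 then pick (e k').+1 else pick 0.
have He : forall k, e k < e k.+1 by move=> k; exact: (Hpick _).1.
exists (fun k => sa (e k)); split.
  move=> k. apply: smono; [exact: sa_incr | exact: He].
exists c0 => i j Hij. rewrite sa_col; last exact: smono He _ _ Hij.
case: i {Hij} => [|i]; exact: (Hpick _).2.2.
Qed.

End Ramsey.

Section L9.
Variables (S Q : finType) (A : eba S Q).

Lemma reach_cat p a b q :
  reach A p (a ++ b) q <-> exists m, reach A p a m /\ reach A m b q.
Proof.
elim: a p => [|x a IH] p /=.
  split; [by exists p | by case=> m [-> ]].
split.
  case=> p' Hp' /IH [m [H1 H2]]. by exists m; split => //; exists p'.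
case=> m [[p' Hp' H1] H2]. exists p' => //. apply/IH. by exists m.
Qed.

Lemma split_cat (T : Type) (a b x y : seq T) : a ++ b = x ++ y ->
  (exists z, a = x ++ z /\ y = z ++ b) \/ (exists z, x = a ++ z /\ b = z ++ y).
Proof.
elim: a x => [|c a IH] x /=.
  move=> ->. by right; exists x.
case: x => [|d x] /=.
  move=> <-. left. by exists (c :: a).
case=> -> /IH [[z [-> ->]]|[z [-> ->]]]; [left|right]; by exists z.
Qed.

Lemma reachF_cat p a b q :
  reachF A p (a ++ b) q <-> exists m, (reachF A p a m /\ reach A m b q) \/
                                      (reach A p a m /\ reachF A m b q).
Proof.
split.
  case=> f [Hf [x [y [E [H1 H2]]]]].
  case: (split_cat E) => [[z [Ea Ey]]|[z [Ex Eb]]].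
    subst. move/reach_cat: H2 => [m [H2 H3]]. exists m. left; split => //.
    exists f; split => //. by exists x, z.
  subst. move/reach_cat: H1 => [m [H1 H3]]. exists m. right; split => //.
  exists f; split => //. by exists z, y.
case=> m [[[f [Hf [x [y [E [H1 H2]]]]]] H3]|[H1 [f [Hf [x [y [E [H2 H3]]]]]]]].
  exists f; split => //. exists x, (y ++ b). rewrite E catA; split => //; split => //.
  apply/reach_cat. by exists m.
exists f; split => //. exists (a ++ x), y. rewrite E catA; split => //; split => //.
apply/reach_cat. by exists m.
Qed.

Lemma sim_refl w : sim A w w. Proof. by move=> p q. Qed.
Lemma sim_sym w u : sim A w u -> sim A u w.
Proof. move=> H p q. case: (H p q) => H1 H2. split; by symmetry. Qed.
Lemma sim_trans w u v : sim A w u -> sim A u v -> sim A w v.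
Proof.
move=> H H' p q. case: (H p q) => H1 H2. case: (H' p q) => H3 H4.
split; [exact: iff_trans H1 H3 | exact: iff_trans H2 H4].
Qed.

Lemma sim_cat a a' b b' : sim A a a' -> sim A b b' -> sim A (a ++ b) (a' ++ b').
Proof.
move=> Ha Hb p q. split.
  rewrite !reach_cat. split; case=> m [H1 H2]; exists m;
    (split; [apply/(proj1 (Ha _ _)) | apply/(proj1 (Hb _ _))]) => //.
rewrite !reachF_cat. split; case=> m [[H1 H2]|[H1 H2]]; exists m.
- left. split; [exact/(proj2 (Ha p m))|exact/(proj1 (Hb m q))].
- right. split; [exact/(proj1 (Ha p m))|exact/(proj2 (Hb m q))].
- left. split; [exact/(proj2 (Ha p m))|exact/(proj1 (Hb m q))].
- right. split; [exact/(proj1 (Ha p m))|exact/(proj2 (Hb m q))].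
Qed.

Lemma cls_sim w a b : cls A w a -> cls A w b -> sim A a b.
Proof.
case: w => [|c w] /=; first by move=> -> ->; apply: sim_refl.
move=> [_ H1] [_ H2]. apply: sim_trans (sim_sym H1) H2.
Qed.

Lemma cls_self w : cls A w w.
Proof. case: w => [|c w] /=; first by []. split; [by [] | exact: sim_refl]. Qed.

Lemma cls_same v x z : cls A v x -> (cls A x z <-> cls A v z).
Proof.
case: v => [|c v] /=; first by move=> ->.
case: x => [|d x] [] // _ H /=. split; case=> Hz H'; split => //.
  exact: sim_trans H H'.
exact: sim_trans (sim_sym H) H'.
Qed.

Lemma acc_fin_sim a b : sim A a b -> accepts A (Fw a) -> accepts A (Fw b).
Proof. move=> H [q [Hq Hr]]. exists q; split => //. exact/(proj1 (H _ _)). Qed.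


Definition seg (t : nat -> S) i d := map t (iota i d).

Lemma seg_cat t i d e : seg t i (d + e) = seg t i d ++ seg t (i + d) e.
Proof. by rewrite /seg iotaD map_cat. Qed.

Lemma size_seg t i d : size (seg t i d) = d.
Proof. by rewrite /seg size_map size_iota. Qed.

Lemma nth_seg t i d k x0 : k < d -> nth x0 (seg t i d) k = t (i + k).
Proof. move=> H. by rewrite /seg (nth_map 0) ?size_iota // nth_iota. Qed.

Lemma run_reach (r : nat -> Q) (t : nat -> S) :
  (forall i, r i.+1 \in delta A (r i) (t i)) ->
  forall d i, reach A (r i) (seg t i d) (r (i + d)).
Proof.
move=> Hr; elim=> [|d IH] i /=; first by rewrite addn0.
exists (r i.+1) => //. by rewrite -addSnnS; apply: IH.
Qed.

Lemma run_reachF (r : nat -> Q) (t : nat -> S) :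
  (forall i, r i.+1 \in delta A (r i) (t i)) ->
  forall d i m, m <= d -> r (i + m) \in fin A -> reachF A (r i) (seg t i d) (r (i + d)).
Proof.
move=> Hr d i m Hm Hf. exists (r (i + m)); split => //.
exists (seg t i m), (seg t (i + m) (d - m)). rewrite -seg_cat subnKC //.
split => //; split; first exact: run_reach.
have := run_reach Hr (d - m) (i + m). by rewrite -addnA subnKC.
Qed.

Lemma reach_path (x0 : S) p w q : reach A p w q -> exists f : nat -> Q,
  [/\ f 0 = p, f (size w) = q & forall k, k < size w -> f k.+1 \in delta A (f k) (nth x0 w k)].
Proof.
elim: w p => [|a w IH] p /=.
  move=> ->. by exists (fun _ => q); split.
case=> p' Hp' /IH [f [H0 H1 H2]].
exists (fun k => if k is k'.+1 then f k' else p); split => //.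
case=> [|k] /= Hk; first by rewrite H0.
exact: H2.
Qed.

Lemma path_cat (x0 : S) (f g : nat -> Q) x y :
  f (size x) = g 0 ->
  (forall k, k < size x -> f k.+1 \in delta A (f k) (nth x0 x k)) ->
  (forall k, k < size y -> g k.+1 \in delta A (g k) (nth x0 y k)) ->
  let h := fun k => if k < size x then f k else g (k - size x) in
  forall k, k < size (x ++ y) -> h k.+1 \in delta A (h k) (nth x0 (x ++ y) k).
Proof.
move=> E Hf Hg h k Hk. rewrite /h nth_cat.
case: (ltnP k (size x)) => H1.
  case: (ltnP k.+1 (size x)) => H2; first exact: Hf.
  have Ek : k.+1 = size x by apply/eqP; rewrite eqn_leq H1 H2.
  by rewrite Ek subnn -E -Ek; apply: Hf.
have -> : (k.+1 < size x) = false by rewrite ltnNge leqW.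
rewrite subSn //. apply: Hg.
rewrite size_cat in Hk. by rewrite ltn_subLR.
Qed.

Lemma reachF_path (x0 : S) p w q : reachF A p w q -> exists f : nat -> Q,
  [/\ f 0 = p, f (size w) = q, forall k, k < size w -> f k.+1 \in delta A (f k) (nth x0 w k)
    & exists m, m <= size w /\ f m \in fin A].
Proof.
case=> f'' [Hf [x [y [-> [H1 H2]]]]].
have [f [F0 F1 F2]] := reach_path x0 H1.
have [g [G0 G1 G2]] := reach_path x0 H2.
exists (fun k => if k < size x then f k else g (k - size x)); split.
- rewrite /=. case: (posnP (size x)) => Hx.
  + by rewrite Hx /= subn0 G0 -F1 Hx F0.
  + by [].
- by rewrite size_cat ltnNge leq_addr /= addKn.
- apply: path_cat => //. by rewrite F1 G0.
- exists (size x); split; first by rewrite size_cat leq_addr.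
  by rewrite ltnn subnn G0.
Qed.


Fixpoint bsum (sz : nat -> nat) n := if n is n'.+1 then bsum sz n' + sz n' else 0.
Fixpoint pos (sz : nat -> nat) i : nat * nat :=
  if i is i'.+1 then
    let: (n, k) := pos sz i' in if k.+1 < sz n then (n, k.+1) else (n.+1, 0)
  else (0, 0).

Section Pos.
Variables (sz : nat -> nat) (Hsz : forall n, 0 < sz n).

Lemma pos_inv i : (pos sz i).2 < sz (pos sz i).1 /\ i = bsum sz (pos sz i).1 + (pos sz i).2.
Proof.
elim: i => [|i [IH1 IH2]] /=; first by rewrite Hsz.
move: IH1 IH2. case: (pos sz i) => n k /= H1 H2.
case: ifP => H3 /=; first by rewrite H3 H2 addnS.
rewrite Hsz addn0; split => //. have Ek : k.+1 = sz n.
  by apply/eqP; rewrite eqn_leq H1 leqNgt H3.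
by rewrite H2 -Ek addnS.
Qed.

Lemma bsum_mono n m : n <= m -> bsum sz n <= bsum sz m.
Proof.
move=> H. rewrite -(subnKC H). elim: (m - n) => [|d IH]; first by rewrite addn0.
rewrite addnS /=. exact: leq_trans IH (leq_addr _ _).
Qed.

Lemma bsum_ge n : n <= bsum sz n.
Proof. elim: n => [|n IH] //=. rewrite -addn1. apply: leq_add => //. Qed.

Lemma pos_eq n k : k < sz n -> pos sz (bsum sz n + k) = (n, k).
Proof.
move=> Hk. have [H1 H2] := pos_inv (bsum sz n + k).
move: H1 H2. case: (pos sz _) => n' k' /= H1 H2.
have En : n' = n.
  case: (ltngtP n' n) => // H.
  - have := bsum_mono H. rewrite /= => H'. move: H2.
    have : bsum sz n' + k' < bsum sz n' + sz n' by rewrite ltn_add2l.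
    move=> H4 H2. rewrite -H2 in H4. have := leq_trans H4 H'.
    by rewrite ltnNge leq_addr.
  - have := bsum_mono H. rewrite /= => H'. move: H2.
    have : bsum sz n + k < bsum sz n + sz n by rewrite ltn_add2l.
    move=> H4 H2. rewrite H2 in H4. have := leq_trans H4 H'.
    by rewrite ltnNge leq_addr.
subst n'. congr pair. by apply/eqP; rewrite -(eqn_add2l (bsum sz n)) H2.
Qed.

End Pos.

Definition flat_S (B : nat -> seq S) n : flat_upto B n.+1 = flat_upto B n ++ B n.
Proof. by rewrite /flat_upto -addn1 iotaD map_cat flatten_cat /= cats0. Qed.

Lemma size_flat (B : nat -> seq S) n : size (flat_upto B n) = bsum (fun j => size (B j)) n.
Proof. elim: n => [|n IH] //=. by rewrite flat_S size_cat IH. Qed.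

Definition pref (t : nat -> S) l := l = seg t 0 (size l).
Definition BC t (B : nat -> seq S) := (forall n, B n <> [::]) /\ forall N, pref t (flat_upto B N).

Lemma BC_block t B : BC t B -> forall n, B n = seg t (bsum (fun j => size (B j)) n) (size (B n)).
Proof.
case=> _ H n. have H1 := H n. have H2 := H n.+1.
rewrite /pref flat_S size_cat seg_cat -H1 add0n size_flat in H2.
have := f_equal (drop (size (flat_upto B n))) H2. rewrite !drop_size_cat //.
Qed.


Lemma acc_blocks1 t B : BC t B -> accepts A (Iw t) ->
  exists P : nat -> Q, [/\ P 0 = q0 A, forall n, reach A (P n) (B n) (P n.+1) &
    forall N, exists n, N <= n /\ reachF A (P n) (B n) (P n.+1)].
Proof.
move=> HB [r [R0 [Rd RF]]].
set sz := fun j => size (B j).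
have Hsz : forall n, 0 < sz n by move=> n; rewrite /sz lt0n size_eq0; apply/eqP; exact: HB.1.
have Hb := BC_block HB.
exists (fun n => r (bsum sz n)); split => //.
  move=> n /=. rewrite (Hb n). exact: run_reach.
move=> N. have [m [Hm Hf]] := RF (bsum sz N).
have [P1 P2] := pos_inv Hsz m.
move: P1 P2. case: (pos sz m) => n k /= P1 P2.
exists n; split.
  rewrite leqNgt; apply/negP => H.
  have := @bsum_mono sz _ _ H. rewrite /= => H'.
  have : m < bsum sz n + sz n by rewrite P2 ltn_add2l.
  move=> H4. have := leq_trans H4 H'. have := leq_trans Hm (leqnn m).
  move=> H5 H6. have := leq_trans H6 H5. by rewrite ltnn.
rewrite (Hb n) /=. apply: (run_reachF Rd (m := k)); first exact: ltnW.
by rewrite -P2.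
Qed.

Lemma acc_blocks2 t B : BC t B ->
  (exists P : nat -> Q, [/\ P 0 = q0 A, forall n, reach A (P n) (B n) (P n.+1) &
    forall N, exists n, N <= n /\ reachF A (P n) (B n) (P n.+1)]) ->
  accepts A (Iw t).
Proof.
move=> HB [P [P0 PR PF]].
set sz := fun j => size (B j).
have Hsz : forall n, 0 < sz n by move=> n; rewrite /sz lt0n size_eq0; apply/eqP; exact: HB.1.
have Hb := BC_block HB.
pose Spec n (f : nat -> Q) := [/\ f 0 = P n, f (sz n) = P n.+1,
   forall k, k < sz n -> f k.+1 \in delta A (f k) (nth (t 0) (B n) k)
 & reachF A (P n) (B n) (P n.+1) -> exists m, m <= sz n /\ f m \in fin A].
have HS : forall n, exists f, Spec n f.
  move=> n. case: (classic (reachF A (P n) (B n) (P n.+1))) => H.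
    have [f [F0 F1 F2 F3]] := reachF_path (t 0) H. by exists f; split.
  have [f [F0 F1 F2]] := reach_path (t 0) (PR n). by exists f; split.
pose fs n := epsilon (inhabits (fun _ : nat => q0 A)) (Spec n).
have Hfs : forall n, Spec n (fs n) by move=> n; apply: epsilon_spec; exact: HS.
exists (fun i => fs (pos sz i).1 (pos sz i).2); split; [|split].
- by case: (Hfs 0) => /= -> _ _ _.
- move=> i. have [P1 P2] := pos_inv Hsz i.
  rewrite [pos sz i.+1]/=. move: P1 P2. case: (pos sz i) => n k /= P1 P2.
  have Et : t i = nth (t 0) (B n) k by rewrite (Hb n) nth_seg // -P2.
  case: (Hfs n) => F0 F1 F2 F3.
  case: ifP => H /=; first by rewrite Et; apply: F2.
  have Ek : k.+1 = sz n by apply/eqP; rewrite eqn_leq P1 leqNgt H.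
  case: (Hfs n.+1) => G0 _ _ _. rewrite G0 -F1 -Ek Et. exact: F2.
- move=> N. have [n [Hn HF]] := PF N.
  case: (Hfs n) => F0 F1 F2 F3. have [m [Hm Hf]] := F3 HF.
  case: (ltngtP m (sz n)) Hm => // Hm' _.
    exists (bsum sz n + m); split.
      apply: leq_trans Hn (leq_trans (bsum_ge Hsz n) (leq_addr _ _)).
    by rewrite pos_eq.
  exists (bsum sz n.+1 + 0); split.
    rewrite addn0. exact: leq_trans (leqW Hn) (bsum_ge Hsz _).
  rewrite pos_eq //=. case: (Hfs n.+1) => G0 _ _ _. by rewrite G0 -F1 -Hm'.
Qed.


Lemma pref_nth t l : (forall i, i < size l -> t i = nth (t 0) l i) -> pref t l.
Proof.
move=> H. apply: (eq_from_nth (x0 := t 0)); first by rewrite size_seg.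
move=> i Hi. rewrite nth_seg // add0n. exact: (esym (H i Hi)).
Qed.

Lemma flat_nil (ws : nat -> seq S) N : (forall n, ws n = [::]) -> flat_upto ws N = [::].
Proof. move=> H. elim: N => [|N IH] //. by rewrite flat_S IH H. Qed.

Definition wstr (u : seq S) (s : nat -> S) :=
  fun i => if i < size u then nth (s 0) u i else s (i - size u).
Definition bx (u : seq S) (ws : nat -> seq S) n := if n is 0 then u ++ ws 0 else ws n.

Lemma flat_bx u ws N : flat_upto (bx u ws) N.+1 = u ++ flat_upto ws N.+1.
Proof.
elim: N => [|N IH]; first by rewrite !flat_S.
by rewrite flat_S IH [in RHS]flat_S catA.
Qed.

Lemma wcat_BC u ws s : (forall n, ws n <> [::]) ->
  (forall N i, i < size (flat_upto ws N) -> s i = nth (s 0) (flat_upto ws N) i) ->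
  BC (wstr u s) (bx u ws).
Proof.
move=> Hne Hs. split.
  case=> [|n] /=; last exact: Hne. by case: u => //; apply: Hne.
case=> [|N]; first by [].
rewrite flat_bx. apply: pref_nth => i Hi. rewrite nth_cat /wstr.
case: ifP => H; first exact: set_nth_default.
have Hi' : i - size u < size (flat_upto ws N.+1).
  rewrite size_cat in Hi. rewrite ltn_subLR //. by rewrite leqNgt H.
rewrite (Hs N.+1 _ Hi'). exact: set_nth_default.
Qed.

Lemma sat (C D : flang S) (x y : word S) : is_cls A C -> is_cls A D -> CDomega C D x -> CDomega C D y ->
  accepts A x -> accepts A y.
Proof.
move=> [c ->] [d ->] [u [x' [Hu [[ws [Hws Hx']] ->]]]] [v [y' [Hv [[ws' [Hws' Hy']] ->]]]].
have Huv := cls_sim Hu Hv.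
case: d Hws Hws' => [|e d] Hws Hws'.
  case: x' Hx' => [z|s] /=.
    case=> N [_ ->]. rewrite (@flat_nil ws N Hws) cats0 => Hacc.
    case: y' Hy' => [z'|s'] /=.
      case=> N' [_ ->]. rewrite (@flat_nil ws' N' Hws') cats0.
      exact: acc_fin_sim Huv Hacc.
    by case=> /(_ 0) [n [_ ]]; rewrite (Hws' n).
  by case=> /(_ 0) [n [_ ]]; rewrite (Hws n).
case: x' Hx' => [z|s] /=.
  by case=> N [/(_ N (leqnn N)) H _]; case: (Hws N).
case=> _ Hs. case: y' Hy' => [z|s'] /=.
  by case=> N [/(_ N (leqnn N)) H _]; case: (Hws' N).
case=> _ Hs' Hacc.
have Hne : forall n, ws n <> [::] by move=> n; case: (Hws n).
have Hne' : forall n, ws' n <> [::] by move=> n; case: (Hws' n).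
have BX := wcat_BC u Hne Hs. have BY := wcat_BC v Hne' Hs'.
have [P [P0 PR PF]] := acc_blocks1 BX Hacc.
have Hsim : forall n, sim A (bx u ws n) (bx v ws' n).
  case=> [|n] /=; first exact: sim_cat Huv (cls_sim (Hws 0) (Hws' 0)).
  exact: cls_sim (Hws n.+1) (Hws' n.+1).
apply: (acc_blocks2 BY). exists P; split => //.
  move=> n. exact/(proj1 (Hsim n _ _)).
move=> N. have [n [Hn H]] := PF N. exists n; split => //.
exact/(proj2 (Hsim n _ _)).
Qed.


Definition pb (P : Prop) : bool := if excluded_middle_informative P then true else false.
Lemma pbP P : pb P = true <-> P.
Proof. rewrite /pb. by case: excluded_middle_informative. Qed.

Definition colr (w : seq S) : {ffun Q * Q -> bool} * {ffun Q * Q -> bool} :=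
  ([ffun pq => pb (reach A pq.1 w pq.2)], [ffun pq => pb (reachF A pq.1 w pq.2)]).

Lemma colr_sim w w' : colr w = colr w' -> sim A w w'.
Proof.
case=> E1 E2 p q.
have := f_equal (fun f : {ffun Q * Q -> bool} => f (p, q)) E1. have := f_equal (fun f : {ffun Q * Q -> bool} => f (p, q)) E2.
rewrite !ffunE /= => H2 H1. split.
  by split => H; apply/pbP; [rewrite -H1 | rewrite H1]; apply/pbP.
by split => H; apply/pbP; [rewrite -H2 | rewrite H2]; apply/pbP.
Qed.

Lemma cls_of_sim w v : w <> [::] -> v <> [::] -> sim A w v -> cls A w v.
Proof. by case: w => [//|c w] _ Hv H; split. Qed.

Lemma cls_cat_eq u w : u <> [::] -> w <> [::] -> sim A (u ++ w) u ->
  cls_cat A (cls A u) (cls A w) = cls A u.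
Proof.
move=> Hu Hw H. apply: functional_extensionality => z.
apply: propositional_extensionality. split.
  case=> x [y [Hx [Hy Hz]]].
  have Nx : x <> [::] by case: u Hu H Hx => [//|c u] _ _ [].
  have Sx : sim A u x by case: u Hu H Hx => [//|c u] _ _ [].
  have Sy : sim A w y by case: w Hw H Hy => [//|c w] _ _ [].
  case: x Nx Sx Hz {Hx} => [//|d x] _ Sx [Hz Sz].
  apply: cls_of_sim => //. apply: sim_trans (sim_sym H) _.
  exact: sim_trans (sim_cat Sx Sy) Sz.
move=> Hz. exists u, w. split; first exact: cls_self. split; first exact: cls_self.
have Nz : z <> [::] by case: u Hu H Hz => [//|c u] _ _ [].
have Sz : sim A u z by case: u Hu H Hz => [//|c u] _ _ [].
case: u Hu H Sz {Hz} => [//|c u] _ H Sz /=. split => //. exact: sim_trans H Sz.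
Qed.

Lemma cls_cat_nil v : cls_cat A (cls A v) (cls A [::]) = cls A v.
Proof.
apply: functional_extensionality => z. apply: propositional_extensionality. split.
  case=> x [y [Hx [/= -> Hz]]]. rewrite cats0 in Hz. exact: (proj1 (cls_same z Hx)) Hz.
move=> Hz. exists v, [::]. split; first exact: cls_self. split => //. by rewrite cats0.
Qed.

Definition factor (s : nat -> S) i j := seg s i (j - i).

Lemma factor_cat s i j k : i <= j -> j <= k -> factor s i j ++ factor s j k = factor s i k.
Proof.
move=> H1 H2. rewrite /factor.
have Ej : j = i + (j - i) by rewrite subnKC.
rewrite [in seg s j _]Ej -seg_cat -Ej. congr seg.
have Ek : k - i = (k - j) + (j - i) by rewrite addnBA // subnK.
by rewrite Ek addnC.
Qed.

Lemma cover_inf s : exists C D, Cpairs A (C, D) /\ CDomega C D (Iw s).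
Proof.
have [a [Ha [c Hc]]] := ramsey (fun i j => colr (factor s i j)).
have Am := smono Ha.
have Hsim : forall i j i' j', i < j -> i' < j' ->
    sim A (factor s (a i) (a j)) (factor s (a i') (a j')).
  move=> i j i' j' H H'. apply: colr_sim. by rewrite (Hc _ _ H) (Hc _ _ H').
have Hne : forall i j, i < j -> factor s (a i) (a j) <> [::].
  move=> i j H E. have := f_equal size E. rewrite /factor size_seg /=.
  by move/eqP; rewrite subn_eq0 leqNgt Am.
have a1 : 0 < a 1 by apply: leq_ltn_trans (leq0n (a 0)) (Ha 0).
set u := factor s 0 (a 1). set w := factor s (a 1) (a 2).
have Hu : u <> [::].
  move=> E. have := f_equal size E. rewrite /u /factor size_seg subn0 /=.
  by move=> E'; rewrite E' in a1.
have Hw : w <> [::] by exact: Hne.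
have Eu : u = factor s 0 (a 0) ++ factor s (a 0) (a 1) by rewrite factor_cat // ltnW.
exists (cls A u), (cls A w). split.
  split; first by exists u. split; first by exists w. split.
    apply: cls_cat_eq; [exact: Hu | exact: Hw | ].
    rewrite /w factor_cat ?(ltnW (Ha 1)) // Eu -(@factor_cat s 0 (a 0) (a 2)) //;
      last exact: ltnW (Am _ _ (isT : 0 < 2)).
    apply: sim_cat; [exact: sim_refl | exact: Hsim].
  apply: cls_cat_eq; [exact: Hw | exact: Hw | ].
  apply: (@sim_trans _ (factor s (a 1) (a 2) ++ factor s (a 2) (a 3))).
    apply: sim_cat; [exact: sim_refl | exact: Hsim].
  rewrite factor_cat; [exact: Hsim | exact: ltnW (Ha 1) | exact: ltnW (Ha 2)].
exists u, (Iw (fun i => s (a 1 + i))). split; first exact: cls_self. split.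
  exists (fun n => factor s (a n.+1) (a n.+2)). split.
    move=> n. apply: cls_of_sim => //; first exact: Hne. exact: Hsim.
  have Hflat : forall N, flat_upto (fun n => factor s (a n.+1) (a n.+2)) N = factor s (a 1) (a N.+1).
    elim=> [|N IH]; first by rewrite /factor subnn.
    rewrite flat_S IH factor_cat //; last exact: ltnW.
    case: N {IH} => // N. exact: ltnW (Am _ _ (isT : 1 < N.+2)).
  split.
    move=> N. exists N; split => //. exact: Hne.
  move=> N i. rewrite Hflat /factor size_seg => Hi. by rewrite nth_seg.
congr Iw. apply: functional_extensionality => i.
have Su : size u = a 1 by rewrite /u /factor size_seg subn0.
rewrite Su. case: ifP => H; first by rewrite /u /factor nth_seg ?subn0.
by rewrite subnKC // leqNgt H.
Qed.

Lemma cover x : exists C D, Cpairs A (C, D) /\ CDomega C D x.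
Proof.
case: x => [v|s]; last exact: cover_inf.
exists (cls A v), (cls A [::]). split.
  split; first by exists v. split; first by exists [::].
  split; exact: cls_cat_nil.
exists v, (Fw [::]). split; first exact: cls_self. split; last by rewrite /= cats0.
exists (fun _ => [::]). split => //. by exists 0.
Qed.

End L9.

Theorem lemma9 (S Q : finType) (A : eba S Q) :
  (forall L : flang S,
     (forall u, gamma_star (alpha_star A L) u -> accepts A (Fw u)) <->
     (forall u, L u -> accepts A (Fw u))) /\
  (forall L : wlang S,
     (forall x, gamma_omega (alpha_omega A L) x -> accepts A x) <->
     (forall x, L x -> accepts A x)).
Proof.
split.
- move=> L; split.
  + move=> H u Lu. apply: H. exists (cls A u). split; last exact: cls_self.
    split; first by exists u. exists u; split => //; exact: cls_self.
  + move=> H u [C [[[w ->] [v [Hv Lv]]] Hu]]. exact: acc_fin_sim (cls_sim Hv Hu) (H v Lv).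
- move=> L; split.
  + move=> H x Lx. apply: H. have [C [D [HCD Hx]]] := cover A x.
    exists (C, D); split => //. exists 1; split => //=.
    split => //. exists x; split => //. exists (C, D); split => //.
    split => //. by exists x.
  + move=> H.
    have K : forall V : wlang S, (forall x, V x -> accepts A x) ->
        forall x, gfun_ (ffun_ A V) x -> accepts A x.
      move=> V HV x [[C D] [[[HC [HD _]] [x' [Hx' Vx']]] Hx]].
      exact: sat HC HD Hx' Hx (HV _ Vx').
    have Hn : forall n x, gfun_ (iter n (fun X => ffun_ A (gfun_ X)) (ffun_ A L)) x -> accepts A x.
      elim=> [|n IH] /=; [exact: K H | exact: K IH].
    move=> x [CD [[n [_ Hn']] Hx]]. exact: Hn n x (ex_intro _ CD (conj Hn' Hx)).
Qed.
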